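(* Fix $0<\epsilon<1$ and $z,w\in\mathcal{S}^{n-1}$. If $\tilde z,\tilde w\in\mathcal{S}^{n-1}$ satisfy $\|\tilde z-z\|\leqslant\epsilon$ and $\|\tilde w-w\|\leqslant\epsilon$, then $\|\Phi_{\tilde z,\tilde w}-\Phi_{z,w}\|\leqslant\frac{88}{\pi}\epsilon$.
   Context: $\mathcal{S}^{n-1}$ is the unit sphere in $\mathbb{R}^n$; $\|\cdot\|$ is the spectral norm for matrices. For nonzero $z,w$: $\theta_{z,w}=\angle(z,w)\in[0,\pi]$, $\hat z=z/\|z\|$, $M_{\hat z\leftrightarrow\hat w}$ the symmetric matrix sending $\hat z\mapsto\hat w$, $\hat w\mapsto\hat z$ and vanishing on $\mathrm{span}(z,w)^\perp$ ($\pm\hat z\hat z^\top$ when $\theta_{z,w}\in\{0,\pi\}$), and $\Phi_{z,w}=\frac{\pi-2\theta_{z,w}}{\pi}I_n+\frac{2\sin\theta_{z,w}}{\pi}M_{\hat z\leftrightarrow\hat w}$. *)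

(* Defs.v *)
From HB Require Import structures.
From mathcomp Require Import all_boot all_order all_algebra.
From mathcomp Require Import all_classical all_reals.
From mathcomp Require Import exp trigo.
Set Implicit Arguments. Unset Strict Implicit. Unset Printing Implicit Defensive.
Import Order.TTheory GRing.Theory Num.Theory.
Local Open Scope ring_scope.
Local Open Scope classical_set_scope.

Section Defs.
Variables (R : realType) (n : nat).

Definition dotv (u v : 'cV[R]_n) : R := \sum_(i < n) u i 0 * v i 0.
Definition enorm (u : 'cV[R]_n) : R := Num.sqrt (dotv u u).

Definition sphere : set 'cV[R]_n := [set x | enorm x = 1].

Definition spec_norm (A : 'M[R]_n) : R :=
  sup [set enorm (A *m x) | x in sphere].

Definition hatv (z : 'cV[R]_n) : 'cV[R]_n := (enorm z)^-1 *: z.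
Definition angle (z w : 'cV[R]_n) : R :=
  acos (dotv z w / (enorm z * enorm w)).

(* M_{zhat <-> what}: symmetric, swaps zhat and what, vanishes on
   span(z,w)^perp; equals +/- zhat zhat^T when theta in {0, pi}. *)
Definition swapM (z w : 'cV[R]_n) : 'M[R]_n :=
  let a := hatv z in let b := hatv w in let c := dotv a b in
  if angle z w == 0 then a *m a^T
  else if angle z w == pi then - (a *m a^T)
  else (1 - c ^+ 2)^-1 *: (a *m b^T + b *m a^T - c *: (a *m a^T + b *m b^T)).

Definition Phi (z w : 'cV[R]_n) : 'M[R]_n :=
  ((pi - 2 * angle z w) / pi) *: 1%:M + (2 * sin (angle z w) / pi) *: swapM z w.

End Defs.

(* Main.v *)
Require Import Defs.
From HB Require Import structures.
From mathcomp Require Import all_boot all_order all_algebra.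
From mathcomp Require Import all_classical all_reals.
From mathcomp Require Import exp trigo.
From mathcomp Require Import all_analysis.
From mathcomp Require Import ring lra.
Set Implicit Arguments. Unset Strict Implicit.
Import Order.TTheory GRing.Theory Num.Theory.
Import numFieldNormedType.Exports.
Local Open Scope ring_scope.

Section Vec.
Variables (R : realType) (n : nat).
Implicit Types (u v w a b x y : 'cV[R]_n).

Lemma dotvC u v : dotv u v = dotv v u.
Proof. by apply: eq_bigr => i _; rewrite mulrC. Qed.
Lemma dotvDl u v w : dotv (u + v) w = dotv u w + dotv v w.
Proof. by rewrite /dotv -big_split; apply: eq_bigr => i _; rewrite !mxE mulrDl. Qed.
Lemma dotvZl k u w : dotv (k *: u) w = k * dotv u w.
Proof. by rewrite /dotv mulr_sumr; apply: eq_bigr => i _; rewrite !mxE mulrA. Qed.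
Lemma dotvNl u w : dotv (- u) w = - dotv u w.
Proof. by rewrite -scaleN1r dotvZl mulN1r. Qed.
Lemma dotvBl u v w : dotv (u - v) w = dotv u w - dotv v w.
Proof. by rewrite dotvDl dotvNl. Qed.
Lemma dotvDr u v w : dotv w (u + v) = dotv w u + dotv w v.
Proof. by rewrite dotvC dotvDl !(dotvC w). Qed.
Lemma dotvZr k u w : dotv w (k *: u) = k * dotv w u.
Proof. by rewrite dotvC dotvZl dotvC. Qed.
Lemma dotvBr u v w : dotv w (u - v) = dotv w u - dotv w v.
Proof. by rewrite dotvC dotvBl !(dotvC w). Qed.
Lemma dotv_ge0 u : 0 <= dotv u u.
Proof. by apply: sumr_ge0 => i _; rewrite -expr2 sqr_ge0. Qed.
Lemma dotv_eq0 u : dotv u u = 0 -> u = 0.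
Proof.
move=> /eqP; rewrite psumr_eq0; last by move=> i _; rewrite -expr2 sqr_ge0.
move=> /allP H; apply/matrixP => i j; rewrite (ord1 j) mxE.
by have /(_ (mem_index_enum i)) := H i; rewrite /= mulf_eq0 orbb => /eqP.
Qed.
Lemma enorm_ge0 u : 0 <= enorm u. Proof. exact: sqrtr_ge0. Qed.
Lemma enorm2 u : enorm u ^+ 2 = dotv u u.
Proof. by rewrite sqr_sqrtr // dotv_ge0. Qed.
Lemma enorm_eq0 u : enorm u = 0 -> u = 0.
Proof. by move=> h; apply: dotv_eq0; rewrite -enorm2 h expr0n. Qed.
Lemma enorm1 u : enorm u = 1 -> dotv u u = 1.
Proof. by move=> h; rewrite -enorm2 h expr1n. Qed.
Lemma enormZ k u : enorm (k *: u) = `|k| * enorm u.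
Proof. by rewrite /enorm dotvZl dotvZr mulrA -expr2 sqrtrM ?sqr_ge0 // sqrtr_sqr. Qed.
Lemma enormN u : enorm (- u) = enorm u.
Proof. by rewrite -scaleN1r enormZ normrN1 mul1r. Qed.
Lemma enormB u v : enorm (u - v) = enorm (v - u).
Proof. by rewrite -enormN opprB. Qed.

Lemma CS2 u v : dotv u v ^+ 2 <= dotv u u * dotv v v.
Proof.
set A := dotv u u; set B := dotv u v; set C := dotv v v.
have H t : 0 <= A - 2 * t * B + t ^+ 2 * C.
  have := dotv_ge0 (u - t *: v).
  rewrite !(dotvBl, dotvBr, dotvZl, dotvZr) (dotvC v u) -/A -/B -/C.
  by move=> h; apply: (le_trans h); rewrite le_eqVlt; apply/orP; left; apply/eqP; ring.
have [C0|C0] := eqVneq C 0.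
  have [B0|B0] := eqVneq B 0; first by rewrite B0 expr0n /= mulr_ge0 // dotv_ge0.
  have := H ((A + 1) / (2 * B)); rewrite C0 mulr0 addr0.
  have -> : 2 * ((A + 1) / (2 * B)) * B = A + 1 by field.
  lra.
have Cp : 0 < C by rewrite lt_def C0 dotv_ge0.
have := H (B / C).
have -> : A - 2 * (B / C) * B + (B / C) ^+ 2 * C = (A * C - B ^+ 2) / C by field.
by rewrite pmulr_lge0 ?invr_gt0 // subr_ge0 mulrC.
Qed.

Lemma CS u v : `|dotv u v| <= enorm u * enorm v.
Proof.
rewrite /enorm -sqrtrM ?dotv_ge0 // -sqrtr_sqr ler_sqrt ?CS2 //.
by rewrite mulr_ge0 // dotv_ge0.
Qed.

Lemma enormD u v : enorm (u + v) <= enorm u + enorm v.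
Proof.
rewrite -(ger0_norm (enorm_ge0 (u + v))) -(ger0_norm (addr_ge0 (enorm_ge0 u) (enorm_ge0 v))).
rewrite -ler_sqr ?nnegrE ?normr_ge0 // !real_normK ?num_real //.
rewrite enorm2 sqrrD !enorm2 dotvDl !dotvDr (dotvC v u).
have := CS u v; have := ler_norm (dotv u v); lra.
Qed.

Lemma enormDB u v : enorm u - enorm v <= enorm (u - v).
Proof. have := enormD (u - v) v; rewrite subrK; lra. Qed.
Lemma enorm_dist u v : `|enorm u - enorm v| <= enorm (u - v).
Proof.
rewrite ler_norml enormDB andbT; have := enormDB v u; rewrite enormB; lra.
Qed.

Lemma trmx_dot u v : u^T *m v = (dotv u v)%:M.
Proof.
apply/matrixP => i j; rewrite (ord1 i) (ord1 j) !mxE /=.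
by apply: eq_bigr => k _; rewrite !mxE.
Qed.
Lemma outer_mul a b x : (a *m b^T) *m x = dotv b x *: a.
Proof. by rewrite -mulmxA trmx_dot mul_mx_scalar. Qed.

Lemma dot_bnd a b : enorm a = 1 -> enorm b = 1 -> -1 <= dotv a b <= 1.
Proof. by move=> ha hb; rewrite -ler_norml; have := CS a b; rewrite ha hb mulr1. Qed.

Definition Vx a b x := let c := dotv a b in let p := dotv a x in let q := dotv b x in
  q *: a + p *: b - c *: (p *: a + q *: b).
Definition sv a b : R := Num.sqrt (1 - dotv a b ^+ 2).

Lemma PhiE a b x : enorm a = 1 -> enorm b = 1 ->
  Phi a b *m x = ((pi - 2 * acos (dotv a b)) / pi) *: x + (2 / pi) *: ((sv a b)^-1 *: Vx a b x).
Proof.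
move=> ha hb.
have hat (c : 'cV[R]_n) : enorm c = 1 -> hatv c = c by move=> hc; rewrite /hatv hc invr1 scale1r.
have ang : angle a b = acos (dotv a b) by rewrite /angle ha hb mulr1 divr1.
have cb := dot_bnd ha hb.
have sinE : sin (acos (dotv a b)) = sv a b by rewrite sin_acos.
rewrite /Phi /swapM /= !hat // ang mulmxDl -!scalemxAl mul1mx; congr (_ + _).
case: ifP => [/eqP h0|_].
  have s0 : sv a b = 0 by rewrite -sinE h0 sin0.
  by rewrite sinE s0 invr0 mulr0 mul0r !scale0r scaler0.
case: ifP => [/eqP h0|_].
  have s0 : sv a b = 0 by rewrite -sinE h0 sinpi.
  by rewrite sinE s0 invr0 mulr0 mul0r !scale0r scaler0.
rewrite -scalemxAl mulmxBl mulmxDl -scalemxAl mulmxDl !outer_mul sinE /Vx !scalerA.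
congr (_ *: _).
have hs : sv a b ^+ 2 = 1 - dotv a b ^+ 2.
  by rewrite sqr_sqrtr // subr_ge0 -real_normK ?num_real // expr_le1 // ler_norml.
rewrite -hs.
have [->|s0] := eqVneq (sv a b) 0; first by rewrite !(expr0n, invr0, mulr0, mul0r).
have pi0 : (pi : R) != 0 by rewrite gt_eqF // pi_gt0.
move: (sv a b) s0 (pi : R) pi0 => s s0 P P0; field.
by rewrite s0 P0.
Qed.

Lemma PhiC a b x : enorm a = 1 -> enorm b = 1 -> Phi a b *m x = Phi b a *m x.
Proof.
move=> ha hb; by rewrite !PhiE // /sv /Vx (dotvC b a) (addrC (dotv a x *: b)) (addrC (dotv b x *: b)).
Qed.


Definition yv a b := b - dotv a b *: a.
Definition G2 a b x := let c := dotv a b in let y := yv a b in let s := enorm y in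
  let v := s^-1 *: y in
  (s * c * dotv a x) *: a - c *: (dotv v x *: y) + (s * dotv y x) *: a + (s * dotv a x) *: y.

Lemma yy a b : enorm a = 1 -> enorm b = 1 -> dotv (yv a b) (yv a b) = 1 - dotv a b ^+ 2.
Proof.
move=> ha hb; rewrite /yv !(dotvBl, dotvBr, dotvZl, dotvZr) (enorm1 ha) (enorm1 hb) (dotvC b a).
ring.
Qed.
Lemma ay a b : enorm a = 1 -> dotv a (yv a b) = 0.
Proof. by move=> ha; rewrite /yv dotvBr dotvZr (enorm1 ha) mulr1 subrr. Qed.
Lemma sv_enorm a b : enorm a = 1 -> enorm b = 1 -> sv a b = enorm (yv a b).
Proof. by move=> ha hb; rewrite /sv /enorm yy. Qed.

Lemma GE a b x : enorm a = 1 -> enorm b = 1 -> (sv a b)^-1 *: Vx a b x = G2 a b x.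
Proof.
move=> ha hb; rewrite sv_enorm // /Vx /G2.
have hs := yy ha hb; rewrite -enorm2 in hs.
have hb' : b = yv a b + dotv a b *: a by rewrite /yv subrK.
have hq : dotv b x = dotv (yv a b) x + dotv a b * dotv a x.
  by rewrite {1}hb' dotvDl dotvZl.
rewrite hq dotvZl.
set y := yv a b in hs hb' *.
set c := dotv a b in hs hb' *.
have [s0|s0] := eqVneq (enorm y) 0.
  have y0 := enorm_eq0 s0; rewrite s0 y0 invr0 !(mul0r, scale0r, scaler0, subr0, add0r, addr0).
  by rewrite oppr0.
rewrite hb'; clearbody y c.
apply/matrixP => i j; rewrite !mxE.
move: (enorm y) s0 hs (dotv a x) (dotv y x) (a i j) (y i j) => s s0 hs p t A Y.
apply: (mulfI s0); rewrite [s * (s^-1 * _)]mulrA mulfV // mul1r.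
have -> : s * (s * c * p * A - c * (s^-1 * t * Y) + s * t * A + s * p * Y) =
  s ^+ 2 * c * p * A - c * t * Y + s ^+ 2 * t * A + s ^+ 2 * p * Y by field.
rewrite hs; ring.
Qed.


Lemma decomp a y y' (s s' c c' p t t' dv dv' : R) :
  ((s * c * p) *: a - c *: (dv *: y) + (s * t) *: a + (s * p) *: y) -
  ((s' * c' * p) *: a - c' *: (dv' *: y') + (s' * t') *: a + (s' * p) *: y') =
  ((s - s') * c * p) *: a + (s' * (c-c') * p) *: a - (((c-c') * dv) *: y)
  - ((c' * dv) *: (y - y')) - ((c' * (dv - dv')) *: y') + ((s - s') * t) *: a
  + (s' * (t - t')) *: a + (p * (s - s')) *: y + (p * s') *: (y - y').
Proof. by apply/matrixP => i j; rewrite !mxE; ring. Qed.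

Lemma enormD9 (u1 u2 u3 u4 u5 u6 u7 u8 u9 : 'cV[R]_n) :
  enorm (u1 + u2 - u3 - u4 - u5 + u6 + u7 + u8 + u9) <=
  enorm u1 + enorm u2 + enorm u3 + enorm u4 + enorm u5 + enorm u6 + enorm u7
  + enorm u8 + enorm u9.
Proof.
do 8 (apply: le_trans (enormD _ _) _; rewrite ?enormN lerD2r) => //.
Qed.

Lemma P4 (x y z w X Y Z W : R) : 0 <= x -> 0 <= y -> 0 <= z -> 0 <= w ->
  x <= X -> y <= Y -> z <= Z -> w <= W -> x * y * z * w <= X * Y * Z * W.
Proof.
move=> *; apply: ler_pM; rewrite ?mulr_ge0 //; apply: ler_pM; rewrite ?mulr_ge0 //.
by apply: ler_pM.
Qed.


Lemma P3 (x y z X Y Z : R) : x <= X -> y <= Y -> z <= Z -> 0 <= x -> 0 <= y -> 0 <= z ->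
  x * y * z <= X * Y * Z.
Proof.
move=> hx hy hz x0 y0 z0; apply: ler_pM; rewrite ?mulr_ge0 //; exact: ler_pM.
Qed.

Lemma G2_lip a b b' x : enorm a = 1 -> enorm b = 1 -> enorm b' = 1 -> enorm x = 1 ->
  enorm (G2 a b x - G2 a b' x) <= 10 * enorm (b - b').
Proof.
move=> ha hb hb' hx.
have hd0 : 0 <= enorm (b - b') := enorm_ge0 _.
have hc : `|dotv a b - dotv a b'| <= enorm (b - b').
  by rewrite -dotvBr; have := CS a (b - b'); rewrite ha mul1r.
have hyd : yv a b - yv a b' = (b - b') - dotv a (b - b') *: a.
  by rewrite dotvBr /yv; apply/matrixP => i j; rewrite !mxE; ring.
have hy : enorm (yv a b - yv a b') <= enorm (b - b').
  rewrite hyd; move: (b - b') => e.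
  rewrite /enorm ler_sqrt ?dotv_ge0 // !(dotvBl, dotvBr, dotvZl, dotvZr) (enorm1 ha) (dotvC e a).
  have := sqr_ge0 (dotv a e); rewrite expr2; lra.
have hyyb := yy ha hb; have hyyb' := yy ha hb'.
rewrite -enorm2 in hyyb; rewrite -enorm2 in hyyb'.
have cb := dot_bnd ha hb; have cb' := dot_bnd ha hb'.
rewrite /G2 /= decomp.
set d := enorm (b - b') in hd0 hc hy *.
set y := yv a b in hyyb hy *; set y' := yv a b' in hyyb' hy *.
set s := enorm y in hyyb *; set s' := enorm y' in hyyb' *.
set c := dotv a b in hc hyyb cb *; set c' := dotv a b' in hc hyyb' cb' *.
have s0 : 0 <= s := enorm_ge0 _; have s0' : 0 <= s' := enorm_ge0 _.
have hs : `|s - s'| <= d := le_trans (enorm_dist _ _) hy.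
have s1 : s <= 1 by have := sqr_ge0 c; nra.
have s1' : s' <= 1 by have := sqr_ge0 c'; nra.
have c1 : `|c| <= 1 by rewrite ler_norml.
have c1' : `|c'| <= 1 by rewrite ler_norml.
have p1 : `|dotv a x| <= 1 by have := CS a x; rewrite ha hx mulr1.
have t1 : `|dotv y x| <= 1 by have := CS y x; rewrite hx mulr1 -/s => h; apply: le_trans h s1.
have ht : `|dotv y x - dotv y' x| <= d.
  by rewrite -dotvBl; have := CS (y - y') x; rewrite hx mulr1 => h; apply: le_trans h hy.
have hsv (z : 'cV[R]_n) : z = enorm z *: ((enorm z)^-1 *: z).
  have [z0|z0] := eqVneq (enorm z) 0; first by rewrite (enorm_eq0 z0) !scaler0.
  by rewrite scalerA mulfV // scale1r.
have hv1 (z : 'cV[R]_n) : enorm ((enorm z)^-1 *: z) <= 1.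
  rewrite enormZ; have [z0|z0] := eqVneq (enorm z) 0; first by rewrite z0 invr0 normr0 mul0r.
  by rewrite ger0_norm ?invr_ge0 ?enorm_ge0 // mulVf.
set v := s^-1 *: y; set v' := s'^-1 *: y'.
have v1 : `|dotv v x| <= 1 by have := CS v x; rewrite hx mulr1 => h; apply: le_trans h (hv1 _).
have hvv : `|dotv v x - dotv v' x| * s' <= 2 * d.
  rewrite -dotvBl; apply: le_trans (ler_wpM2r s0' (CS _ _)) _; rewrite hx mulr1.
  rewrite mulrC -(ger0_norm s0') -enormZ.
  have -> : s' *: (v - v') = (s' - s) *: v + (y - y').
    rewrite {1}(hsv y) {1}(hsv y') -/s -/s' -/v -/v'.
    by clearbody v v'; apply/matrixP => i j; rewrite !mxE; ring.
  apply: le_trans (enormD _ _) _; rewrite enormZ distrC.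
  have := hv1 y; rewrite -/s -/v => hv.
  have : `|s - s'| * enorm v <= d * 1 by apply: ler_pM; rewrite ?normr_ge0 ?enorm_ge0.
  lra.
apply: le_trans (enormD9 _ _ _ _ _ _ _ _ _) _.
rewrite !enormZ ha !normrM -/s -/s'.
have n0 := normr_ge0; have e0 := enorm_ge0.
have l1 : (1 : R) <= 1 := lexx _.
have s1a : `|s'| <= 1 by rewrite ger0_norm.
have B1 := P3 hs c1 p1 (n0 _ _ _) (n0 _ _ _) (n0 _ _ _).
have B2 := P3 s1a hc p1 (n0 _ _ _) (n0 _ _ _) (n0 _ _ _).
have B3 := P3 hc v1 s1 (n0 _ _ _) (n0 _ _ _) s0.
have B4 := P3 c1' v1 hy (n0 _ _ _) (n0 _ _ _) (e0 _).
have B5 : `|c'| * `|dotv v x - dotv v' x| * s' <= 1 * (2 * d).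
  by rewrite -mulrA; apply: ler_pM => //; rewrite mulr_ge0.
have B6 := P3 hs t1 l1 (n0 _ _ _) (n0 _ _ _) ler01.
have B7 := P3 s1a ht l1 (n0 _ _ _) (n0 _ _ _) ler01.
have B8 := P3 p1 hs s1 (n0 _ _ _) (n0 _ _ _) s0.
have B9 := P3 p1 s1a hy (n0 _ _ _) (n0 _ _ _) (e0 _).
rewrite !mulr1 !mul1r in B1 B2 B3 B4 B5 B6 B7 B8 B9 *.
lra.
Qed.


Lemma sin_lb (u : R) : 0 <= u <= pi / 2 -> u / 4 <= sin u.
Proof.
move=> /andP[u0 u2].
have P0 : (0 : R) < pi := pi_gt0 R.
have P2 : (pi : R) / 2 < 2 := pihalf_lt2 R.
have hc : cos (pi / 4) ^+ 2 = 1 / 2 :> R.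
  have := cos_mulr2n (pi / 4 : R).
  have -> : (pi / 4 : R) *+ 2 = pi / 2 by rewrite mulr2n; field.
  rewrite cos_pihalf mulr2n => h; lra.
have c4p : 0 < cos (pi / 4) :> R by apply: cos_gt0_pihalf; apply/andP; split; lra.
have c4 : 1 / 2 <= cos (pi / 4) :> R by nra.
have s4 : sin (pi / 4) = cos (pi / 4) :> R.
  by rewrite -cosBpihalf (_ : pi / 4 - pi / 2 = - (pi / 4)) ?cosN //; field.
case: (leP u (pi / 4)) => hu.
  have [->|u0'] := eqVneq u 0; first by rewrite sin0 mul0r.
  have ult : 0 < u by rewrite lt_def u0' u0.
  case: (MVT (f := sin) (df := cos) ult (fun r _ => is_derive_sin r)).
    by apply/continuous_subspaceT => ?; exact: continuous_sin.
  move=> c; rewrite in_itv /= sin0 subr0 => /andP[c0 cu] e.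
  have : cos (pi / 4) <= cos c.
    rewrite leNgt ltr_cos ?in_itv /= -?leNgt; try (apply/andP; split); lra.
  nra.
have : sin (pi / 4) <= sin u.
  rewrite leNgt ltr_sin ?in_itv /= -?leNgt; try (apply/andP; split); lra.
lra.
Qed.


Lemma angle_lip a b b' : enorm a = 1 -> enorm b = 1 -> enorm b' = 1 ->
  `|acos (dotv a b) - acos (dotv a b')| <= 4 * enorm (b - b').
Proof.
move=> ha hb hb'.
have cb := dot_bnd ha hb; have cb' := dot_bnd ha hb'.
have hcos : cos (acos (dotv a b)) = dotv a b by rewrite acosK // in_itv /=.
have hcos' : cos (acos (dotv a b')) = dotv a b' by rewrite acosK // in_itv /=.
have hsin : sin (acos (dotv a b)) = enorm (yv a b) by rewrite sin_acos // -sv_enorm.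
have hsin' : sin (acos (dotv a b')) = enorm (yv a b') by rewrite sin_acos // -sv_enorm.
have t0 := acos_ge0 cb; have t1 := acos_lepi cb.
have t0' := acos_ge0 cb'; have t1' := acos_lepi cb'.
have eb : b = yv a b + dotv a b *: a by rewrite /yv subrK.
have eb' : b' = yv a b' + dotv a b' *: a by rewrite /yv subrK.
have hbb : dotv b b' = dotv a b * dotv a b' + dotv (yv a b) (yv a b').
  transitivity (dotv (yv a b + dotv a b *: a) (yv a b' + dotv a b' *: a)).
    by rewrite -eb -eb'.
  have ay1 := ay b ha; have ay2 := ay b' ha.
  move: ay1 ay2; move: (yv a b) (yv a b') => y y' ay1 ay2.
  rewrite !(dotvDl, dotvDr, dotvZl, dotvZr) (dotvC y a) ay1 ay2 (enorm1 ha).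
  ring.
have hyy : dotv (yv a b) (yv a b') <= enorm (yv a b) * enorm (yv a b').
  exact: le_trans (ler_norm _) (CS _ _).
have hd : enorm (b - b') ^+ 2 = 2 - 2 * dotv b b'.
  rewrite enorm2 !(dotvBl, dotvBr) (enorm1 hb) (enorm1 hb') (dotvC b' b); ring.
have hcB : 1 - cos (acos (dotv a b) - acos (dotv a b')) <= enorm (b - b') ^+ 2 / 2.
  rewrite cosB hcos hcos' hsin hsin' hd; lra.
move: hcB; rewrite -cos_norm.
set al := `|_ - _|.
have al0 : 0 <= al := normr_ge0 _.
have alpi : al <= pi by rewrite /al ler_norml; apply/andP; split; lra.
have -> : al = (al / 2) *+ 2 by rewrite mulr2n; field.
rewrite cos_mulr2n cos2sin2.
have h : al / 2 / 4 <= sin (al / 2) by apply: sin_lb; apply/andP; split; lra.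
have u0 : 0 <= al / 2 by lra.
move: h u0; set u := al / 2 => h u0.
have hd0 := enorm_ge0 (b - b'); set d := enorm (b - b') in hd0 *.
rewrite mulr2n => h2.
have hu : u ^+ 2 <= (2 * d) ^+ 2 by nra.
have : u <= 2 * d by rewrite -ler_sqr ?nnegrE //; lra.
rewrite mulr2n; lra.
Qed.


Lemma Phi_lip2 a b b' x : enorm a = 1 -> enorm b = 1 -> enorm b' = 1 -> enorm x = 1 ->
  enorm (Phi a b *m x - Phi a b' *m x) <= 28 / pi * enorm (b - b').
Proof.
move=> ha hb hb' hx.
rewrite !PhiE // !GE // opprD addrACA -scalerBl -scalerBr.
apply: le_trans (enormD _ _) _; rewrite !enormZ hx mulr1.
have hA := angle_lip ha hb hb'; have hG := G2_lip ha hb hb' hx.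
have hd0 := enorm_ge0 (b - b').
have hG0 := enorm_ge0 (G2 a b x - G2 a b' x).
move: hA hG hd0 hG0.
move: (enorm (b - b')) (enorm (G2 a b x - G2 a b' x)) (acos (dotv a b)) (acos (dotv a b')).
have P0 : (0 : R) < pi := pi_gt0 R.
move: (pi : R) P0 => P P0 d E t t' hA hG hd0 hG0.
have -> : (P - 2 * t) / P - (P - 2 * t') / P = (2 / P) * (t' - t) by field; rewrite gt_eqF.
have k0 : 0 < 2 / P by rewrite divr_gt0.
rewrite normrM (ger0_norm (ltW k0)) distrC.
have -> : 28 / P = 14 * (2 / P) by field; rewrite gt_eqF.
have := ler_wpM2l (ltW k0) hA; have := ler_wpM2l (ltW k0) hG.
have := ltW k0; lra.
Qed.

Local Open Scope classical_set_scope.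
Lemma spec_le (A : 'M[R]_n) K : 0 <= K ->
  (forall x, enorm x = 1 -> enorm (A *m x) <= K) -> spec_norm A <= K.
Proof.
move=> K0 h; rewrite /spec_norm.
set E := (X in sup X).
have [ne|e] := pselect (E !=set0).
  by apply: ge_sup => // r [x hx <-]; exact: h x hx.
have -> : E = set0.
  by apply/seteqP; split => // r hr; exfalso; apply: e; exists r.
by rewrite sup0.
Qed.

End Vec.

Theorem lemma27 (R : realType) (n : nat) (eps : R) (z w zt wt : 'cV[R]_n) :
  0 < eps -> eps < 1 ->
  enorm z = 1 -> enorm w = 1 -> enorm zt = 1 -> enorm wt = 1 ->
  enorm (zt - z) <= eps -> enorm (wt - w) <= eps ->
  spec_norm (Phi zt wt - Phi z w) <= 88 / pi * eps.
Proof.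
move=> e0 e1 hz hw hzt hwt dz dw.
have P0 : (0 : R) < pi := pi_gt0 R.
have k0 : 0 <= pi^-1 * eps by rewrite mulr_ge0 // ?invr_ge0 ltW.
apply: spec_le; first by rewrite mulr_ge0 // ?divr_ge0 // ltW.
move=> x hx; rewrite mulmxBl.
have h1 := Phi_lip2 hzt hwt hw hx.
have h2 := Phi_lip2 hw hzt hz hx.
rewrite (PhiC _ hw hzt) (PhiC _ hw hz) in h2.
have := enormD (Phi zt wt *m x - Phi zt w *m x) (Phi zt w *m x - Phi z w *m x).
rewrite addrA subrK => h.
have c0 : 0 <= 28 / pi :> R by rewrite divr_ge0 // ltW.
have := ler_wpM2l c0 dz; have := ler_wpM2l c0 dw.
move: h1 h2 h; move: (Phi zt wt *m x) (Phi zt w *m x) (Phi z w *m x) => A B C h1 h2 h.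
move: (enorm (A - B)) (enorm (B - C)) (enorm (A - C)) h1 h2 h => u v r h1 h2 h.
move: (pi : R) P0 k0 c0 h1 h2 => P P0 k0 c0 h1 h2.
lra.
Qed.
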